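(* The subgroup of Brunnian braids in $P_n$, namely $\bigcap_{i=1}^n Q_{\{i\}}$, is equal to the subgroup of $P_n$ generated by all monic commutators $x$ with $\sigma(x)=N=\{1,\dots,n\}$.
   Context: $P_n$ denotes the pure braid group on $n$ strands, generated by elements $p_{a,b}$ for $1\le a<b\le n$ subject to the relations: (A) $p_{a,b}p_{a,c}p_{b,c}=p_{a,c}p_{b,c}p_{a,b}=p_{b,c}p_{a,b}p_{a,c}$ for $1\le a<b<c\le n$; (B) $p_{a,b}p_{c,d}=p_{c,d}p_{a,b}$ and $p_{a,d}p_{b,c}=p_{b,c}p_{a,d}$ for $1\le a<b<c<d\le n$; (C) $p_{a,c}p_{b,c}^{-1}p_{b,d}p_{b,c}=p_{b,c}^{-1}p_{b,d}p_{b,c}p_{a,c}$ for $1\le a<b<c<d\le n$. Let $N=\{1,\dots,n\}$. For $S\subseteq N$: $P_S$ is the subgroup generated by the $p_{a,b}$ with $a,b\in S$; $Q_S$ is the subgroup generated by the $p_{a,b}$ with $a\in S$ or $b\in S$. A pure braid is Brunnian if deleting any single strand gives the trivial braid, i.e. it lies in $Q_{\{i\}}$ for every $i\in N$. Commutator convention: $[x,y]=x^{-1}y^{-1}xy$. Monic commutators are defined recursively: each $p_{a,b}$ and $p_{a,b}^{-1}$ ($1\le a<b\le n$) is a monic commutator; if $x,y$ are monic commutators and $[x,y]\neq1$, then $[x,y]$ is a monic commutator. The support $\sigma(x)$ of $x\in P_n$ is the intersection of all $S\subseteq N$ such that $x\in P_S$. *)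

(* Defs.v *)
(* The pure braid group P_n is encoded by its presentation:
   elements are words in the letters p_{a,b}^{+-1} (1 <= a < b <= n),
   modulo the congruence generated by free cancellation and the relations
   (A), (B), (C). Subgroups are predicates on words closed under this
   equivalence. *)
From Stdlib Require Import List Arith Lia.
Import ListNotations.

(* A letter p_{a,b}^{e}, e = true for exponent +1, false for -1. *)
Record letter := Letter { la : nat; lb : nat; lsgn : bool }.

Definition word := list letter.

Definition p (a b : nat) : letter := Letter a b true.
Definition pinv (a b : nat) : letter := Letter a b false.

Definition linv (x : letter) : letter := Letter (la x) (lb x) (negb (lsgn x)).

Definition winv (w : word) : word := rev (map linv w).

Definition wcomm (x y : word) : word := winv x ++ winv y ++ x ++ y.

Definition valid_letter (n : nat) (x : letter) : Prop :=
  1 <= la x /\ la x < lb x /\ lb x <= n.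

Definition valid (n : nat) (w : word) : Prop := Forall (valid_letter n) w.

Inductive braid_rel (n : nat) : word -> word -> Prop :=
| relA1 a b c : 1 <= a -> a < b -> b < c -> c <= n ->
    braid_rel n [p a b; p a c; p b c] [p a c; p b c; p a b]
| relA2 a b c : 1 <= a -> a < b -> b < c -> c <= n ->
    braid_rel n [p a c; p b c; p a b] [p b c; p a b; p a c]
| relB1 a b c d : 1 <= a -> a < b -> b < c -> c < d -> d <= n ->
    braid_rel n [p a b; p c d] [p c d; p a b]
| relB2 a b c d : 1 <= a -> a < b -> b < c -> c < d -> d <= n ->
    braid_rel n [p a d; p b c] [p b c; p a d]
| relC a b c d : 1 <= a -> a < b -> b < c -> c < d -> d <= n ->
    braid_rel n [p a c; pinv b c; p b d; p b c] [pinv b c; p b d; p b c; p a c].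

Inductive beq (n : nat) : word -> word -> Prop :=
| beq_refl w : beq n w w
| beq_sym u v : beq n u v -> beq n v u
| beq_trans u v w : beq n u v -> beq n v w -> beq n u w
| beq_free l r x : beq n (l ++ [x; linv x] ++ r) (l ++ r)
| beq_rel l r u v : braid_rel n u v -> beq n (l ++ u ++ r) (l ++ v ++ r).

Inductive prod_of (S : word -> Prop) : word -> Prop :=
| prod_nil : prod_of S []
| prod_snoc w s : prod_of S w -> S s -> prod_of S (w ++ s)
| prod_snoc_inv w s : prod_of S w -> S s -> prod_of S (w ++ winv s).

Definition in_gen (n : nat) (S : word -> Prop) (w : word) : Prop :=
  exists w', prod_of S w' /\ beq n w w'.

Definition in_P (n : nat) (S : nat -> Prop) (w : word) : Prop :=
  in_gen n (fun u => exists a b, 1 <= a /\ a < b /\ b <= n /\ S a /\ S b /\ u = [p a b]) w.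

Definition in_Q (n : nat) (S : nat -> Prop) (w : word) : Prop :=
  in_gen n (fun u => exists a b, 1 <= a /\ a < b /\ b <= n /\ (S a \/ S b) /\ u = [p a b]) w.

Definition brunnian (n : nat) (w : word) : Prop :=
  forall i, 1 <= i <= n -> in_Q n (fun j => j = i) w.

Inductive monic (n : nat) : word -> Prop :=
| monic_p a b : 1 <= a -> a < b -> b <= n -> monic n [p a b]
| monic_pinv a b : 1 <= a -> a < b -> b <= n -> monic n [pinv a b]
| monic_comm x y : monic n x -> monic n y -> ~ beq n (wcomm x y) [] ->
    monic n (wcomm x y).

Definition support (n : nat) (w : word) (i : nat) : Prop :=
  1 <= i <= n /\
  forall S : nat -> Prop, (forall j, S j -> 1 <= j <= n) -> in_P n S w -> S i.

Definition full_support (n : nat) (w : word) : Prop :=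
  forall i, support n w i <-> 1 <= i <= n.

(* Main.v *)
Require Import Defs.
From Stdlib Require Import List Arith Lia.
From Stdlib Require Import Bool ZArith Setoid Morphisms Classical.
Import ListNotations.

Section Basics.
Variable n : nat.

Lemma beq_app_l l u v : beq n u v -> beq n (l ++ u) (l ++ v).
Proof.
  induction 1.
  - apply beq_refl.
  - now apply beq_sym.
  - eapply beq_trans; eauto.
  - pose proof (beq_free n (l++l0) r x) as H. now rewrite <- !app_assoc in H.
  - pose proof (beq_rel n (l++l0) r u v H) as H'. now rewrite <- !app_assoc in H'.
Qed.

Lemma beq_app_r r u v : beq n u v -> beq n (u ++ r) (v ++ r).
Proof.
  induction 1.
  - apply beq_refl.
  - now apply beq_sym.
  - eapply beq_trans; eauto.
  - pose proof (beq_free n l (r0++r) x) as H. now rewrite !app_assoc in *.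
  - pose proof (beq_rel n l (r0++r) u v H) as H'. now rewrite !app_assoc in *.
Qed.

Global Instance beq_equiv : Equivalence (beq n).
Proof.
  split.
  - intro; apply beq_refl.
  - intros x y; apply beq_sym.
  - intros x y z; apply beq_trans.
Qed.

Global Instance app_proper : Proper (beq n ==> beq n ==> beq n) (@app letter).
Proof.
  intros u u' Hu v v' Hv. transitivity (u' ++ v).
  - now apply beq_app_r.
  - now apply beq_app_l.
Qed.

Lemma linv_inv x : linv (linv x) = x.
Proof. destruct x; unfold linv; simpl; now rewrite negb_involutive. Qed.

Lemma winv_app u v : winv (u ++ v) = winv v ++ winv u.
Proof. unfold winv. now rewrite map_app, rev_app_distr. Qed.

Lemma winv_inv u : winv (winv u) = u.
Proof.
  unfold winv. rewrite map_rev, rev_involutive, map_map.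
  erewrite map_ext; [apply map_id|]. intro; apply linv_inv.
Qed.

Lemma winv_cons x u : winv (x :: u) = winv u ++ [linv x].
Proof. reflexivity. Qed.

Lemma cancel_r u : beq n (u ++ winv u) [].
Proof.
  induction u as [|x u IH]; simpl.
  - reflexivity.
  - rewrite winv_cons, app_assoc.
    change (x :: (u ++ winv u) ++ [linv x]) with ([x] ++ (u ++ winv u) ++ [linv x]).
    rewrite IH. simpl. apply (beq_free n [] [] x).
Qed.

Lemma cancel_l u : beq n (winv u ++ u) [].
Proof. rewrite <- (winv_inv u) at 2. apply cancel_r. Qed.

Lemma beq_winv u v : beq n u v -> beq n (winv u) (winv v).
Proof.
  intro H. transitivity (winv u ++ (v ++ winv v)).
  - rewrite cancel_r, app_nil_r. reflexivity.
  - rewrite <- H at 1. rewrite app_assoc, cancel_l. reflexivity.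
Qed.

Global Instance winv_proper : Proper (beq n ==> beq n) winv.
Proof. intros u v; apply beq_winv. Qed.

Lemma prod_of_app S u v : prod_of S u -> prod_of S v -> prod_of S (u ++ v).
Proof.
  intros Hu Hv; induction Hv.
  - now rewrite app_nil_r.
  - rewrite app_assoc. now constructor.
  - rewrite app_assoc. now constructor.
Qed.

Lemma prod_of_base S s : S s -> prod_of S s.
Proof. intro. apply (prod_snoc S [] s); [constructor|auto]. Qed.

Lemma prod_of_base_inv S s : S s -> prod_of S (winv s).
Proof. intro. apply (prod_snoc_inv S [] s); [constructor|auto]. Qed.

Lemma prod_of_winv S u : prod_of S u -> prod_of S (winv u).
Proof.
  induction 1.
  - constructor.
  - rewrite winv_app. apply prod_of_app; auto. now apply prod_of_base_inv.
  - rewrite winv_app, winv_inv. apply prod_of_app; auto. now apply prod_of_base.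
Qed.

Lemma gen_beq S u v : beq n u v -> in_gen n S v -> in_gen n S u.
Proof. intros H [w [Hw Hv]]. exists w; split; auto. now rewrite H. Qed.

Global Instance gen_proper S : Proper (beq n ==> iff) (in_gen n S).
Proof. intros u v H; split; apply gen_beq; auto. now symmetry. Qed.

Lemma gen_nil S : in_gen n S [].
Proof. exists []; split; [constructor|reflexivity]. Qed.

Lemma gen_app S u v : in_gen n S u -> in_gen n S v -> in_gen n S (u ++ v).
Proof.
  intros [u' [Hu Hu']] [v' [Hv Hv']]. exists (u' ++ v'); split.
  - now apply prod_of_app.
  - now rewrite Hu', Hv'.
Qed.

Lemma gen_winv S u : in_gen n S u -> in_gen n S (winv u).
Proof.
  intros [u' [Hu Hu']]. exists (winv u'); split.
  - now apply prod_of_winv.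
  - now rewrite Hu'.
Qed.

Lemma gen_base S s : S s -> in_gen n S s.
Proof. intro; exists s; split; [now apply prod_of_base|reflexivity]. Qed.

Lemma gen_prod S T u : (forall s, S s -> in_gen n T s) -> prod_of S u -> in_gen n T u.
Proof.
  intros H; induction 1.
  - apply gen_nil.
  - apply gen_app; auto.
  - apply gen_app; auto. apply gen_winv; auto.
Qed.

Lemma gen_mono S T u : (forall s, S s -> in_gen n T s) -> in_gen n S u -> in_gen n T u.
Proof.
  intros H [u' [Hu Hu']]. rewrite Hu'. eapply gen_prod; eauto.
Qed.

Lemma gen_conj S u g : in_gen n S u -> in_gen n S g -> in_gen n S (winv g ++ u ++ g).
Proof. intros; repeat apply gen_app; auto; now apply gen_winv. Qed.

End Basics.

Definition keep (j : nat) (x : letter) : bool := negb ((la x =? j) || (lb x =? j)).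
Definition del (j : nat) (w : word) : word := filter (keep j) w.

Lemma del_app j u v : del j (u ++ v) = del j u ++ del j v.
Proof. apply filter_app. Qed.

Lemma beq_rel0 n u v : braid_rel n u v -> beq n u v.
Proof. intro H. pose proof (beq_rel n [] [] u v H). now rewrite !app_nil_r in H0. Qed.

Lemma beq_cancel_mid n l x r : beq n (l ++ [x; linv x] ++ r) (l ++ r).
Proof. apply beq_free. Qed.

Lemma del_rel n j u v : braid_rel n u v -> beq n (del j u) (del j v).
Proof.
  intro H. pose proof (beq_rel0 _ _ _ H) as H0.
  destruct H; unfold del, keep; simpl;
  repeat match goal with |- context [?a =? j] => destruct (Nat.eqb_spec a j) end;
  simpl; subst; try lia; try reflexivity; try exact H0.
  change [p a c; pinv b c; p b c] with ([p a c] ++ [pinv b c; linv (pinv b c)] ++ []).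
  change [pinv b c; p b c; p a c] with ([] ++ [pinv b c; linv (pinv b c)] ++ [p a c]).
  rewrite !beq_cancel_mid. reflexivity.
Qed.

Lemma del_beq n j u v : beq n u v -> beq n (del j u) (del j v).
Proof.
  induction 1.
  - reflexivity.
  - now symmetry.
  - etransitivity; eauto.
  - rewrite !del_app. unfold del at 2, keep; simpl.
    destruct x as [a b s]; simpl.
    destruct ((a =? j) || (b =? j)); simpl.
    + reflexivity.
    + apply beq_free.
  - rewrite !del_app. apply app_proper; [reflexivity|]. apply app_proper; [|reflexivity].
    now apply del_rel.
Qed.

Definition hasj (j : nat) (x : letter) : Prop := la x = j \/ lb x = j.

Lemma del_nohas j w : Forall (fun x => ~ hasj j x) w -> del j w = w.
Proof.
  induction 1; simpl; auto. unfold keep at 1. unfold hasj in H.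
  destruct (Nat.eqb_spec (la x) j), (Nat.eqb_spec (lb x) j); simpl; try tauto.
  now f_equal.
Qed.

Lemma del_Q n j w : in_Q n (fun k => k = j) w -> beq n (del j w) [].
Proof.
  intros [w' [Hp Hb]]. rewrite (del_beq _ _ _ _ Hb). clear Hb.
  induction Hp as [|w0 s Hp IH Hs|w0 s Hp IH Hs].
  - reflexivity.
  - rewrite del_app, IH. destruct Hs as [a [b [_ [_ [_ [Hj ->]]]]]].
    unfold del, keep; simpl. destruct Hj as [->| ->]; rewrite Nat.eqb_refl; simpl;
    [|rewrite orb_true_r]; reflexivity.
  - rewrite del_app, IH. destruct Hs as [a [b [_ [_ [_ [Hj ->]]]]]].
    unfold del, keep; simpl. destruct Hj as [->| ->]; rewrite Nat.eqb_refl; simpl;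
    [|rewrite orb_true_r]; reflexivity.
Qed.

Lemma Q_nohas_triv n j w : in_Q n (fun k => k = j) w -> Forall (fun x => ~ hasj j x) w -> beq n w [].
Proof. intros HQ HF. rewrite <- (del_nohas j w HF). now apply del_Q. Qed.

Definition esum (w : word) : Z := fold_right (fun x acc => ((if lsgn x then 1 else -1) + acc)%Z) 0%Z w.
Lemma esum_app u v : esum (u ++ v) = (esum u + esum v)%Z.
Proof. induction u; simpl; auto. rewrite IHu. lia. Qed.

Lemma esum_beq n u v : beq n u v -> esum u = esum v.
Proof.
  induction 1; auto; try congruence.
  - rewrite !esum_app. simpl. destruct (lsgn x); simpl; lia.
  - rewrite !esum_app. destruct H; simpl; lia.
Qed.

Lemma leaf_nontriv n a b : ~ beq n [p a b] [].
Proof. intro H. apply esum_beq in H. simpl in H. lia. Qed.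
Lemma leafi_nontriv n a b : ~ beq n [pinv a b] [].
Proof. intro H. apply esum_beq in H. simpl in H. lia. Qed.

Definition aletter := (nat * bool)%type.
Definition aword := list aletter.

Definition ainv (w : aword) : aword := rev (map (fun x : aletter => (fst x, negb (snd x))) w).

Definition fpush (st : aword) (x : aletter) : aword :=
  match st with
  | y :: st' => if (fst x =? fst y) && xorb (snd x) (snd y) then st' else x :: st
  | [] => [x]
  end.

Definition fred (w : aword) : aword := rev (fold_left fpush w []).

Definition interp (env : nat -> letter) (w : aword) : word :=
  map (fun x : aletter => if snd x then env (fst x) else linv (env (fst x))) w.

Fixpoint aeqb (u v : aword) : bool :=
  match u, v with
  | [], [] => true
  | x :: u', y :: v' => (fst x =? fst y) && Bool.eqb (snd x) (snd y) && aeqb u' v'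
  | _, _ => false
  end.

Lemma aeqb_eq u v : aeqb u v = true -> u = v.
Proof.
  revert v; induction u as [|[k s] u IH]; destruct v as [|[k' s'] v]; simpl; try discriminate; auto.
  intro H. apply andb_prop in H as [H H3]. apply andb_prop in H as [H1 H2].
  apply Nat.eqb_eq in H1. apply eqb_prop in H2. subst. f_equal. auto.
Qed.

Section Cert.
Variable n : nat.
Variable env : nat -> letter.

Lemma interp_app u v : interp env (u ++ v) = interp env u ++ interp env v.
Proof. apply map_app. Qed.

Lemma interp_ainv u : interp env (ainv u) = winv (interp env u).
Proof.
  unfold interp, ainv, winv. rewrite map_rev, map_map, map_map. f_equal.
  apply map_ext. intros [k s]; destruct s; simpl; auto. now rewrite linv_inv.
Qed.

Lemma fpush_ok st x : beq n (interp env (rev st ++ [x])) (interp env (rev (fpush st x))).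
Proof.
  destruct st as [|y st]; simpl; [reflexivity|].
  destruct x as [k s], y as [k' s']; simpl.
  destruct (Nat.eqb_spec k k'); simpl; [|reflexivity].
  subst. destruct s, s'; simpl; try reflexivity;
  rewrite <- app_assoc, interp_app; simpl;
  rewrite <- (app_nil_r (interp env (rev st))) at 2.
  - pose proof (beq_free n (interp env (rev st)) [] (linv (env k'))) as H.
    rewrite linv_inv in H. exact H.
  - apply beq_free.
Qed.

Lemma fold_ok w st : beq n (interp env (rev st ++ w)) (interp env (rev (fold_left fpush w st))).
Proof.
  revert st; induction w as [|x w IH]; intro st; simpl.
  - now rewrite app_nil_r.
  - rewrite <- IH. replace (rev st ++ x :: w) with ((rev st ++ [x]) ++ w) by (now rewrite <- app_assoc).
    rewrite (interp_app (rev st ++ [x]) w), (interp_app (rev (fpush st x)) w), fpush_ok. reflexivity.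
Qed.

Lemma fred_ok w : beq n (interp env w) (interp env (fred w)).
Proof. unfold fred. rewrite <- fold_ok. reflexivity. Qed.

Definition relator (rels : list (aword * aword)) (k : nat) : aword :=
  let uv := nth k rels ([], []) in fst uv ++ ainv (snd uv).

Definition cprod (rels : list (aword * aword)) (cert : list (aword * nat * bool)) : aword :=
  flat_map (fun t : aword * nat * bool => match t with (c, k, s) =>
     c ++ (if s then relator rels k else ainv (relator rels k)) ++ ainv c end) cert.

Lemma relator_triv rels k :
  Forall (fun uv => beq n (interp env (fst uv)) (interp env (snd uv))) rels ->
  beq n (interp env (relator rels k)) [].
Proof.
  intro H. unfold relator. destruct (nth_in_or_default k rels ([], [])) as [Hi|Hd].
  - rewrite Forall_forall in H. specialize (H _ Hi).
    rewrite interp_app, interp_ainv, H. apply cancel_r.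
  - rewrite Hd. simpl. reflexivity.
Qed.

Lemma cprod_triv rels cert :
  Forall (fun uv => beq n (interp env (fst uv)) (interp env (snd uv))) rels ->
  beq n (interp env (cprod rels cert)) [].
Proof.
  intro H. induction cert as [|[[c k] s] cert IH]; simpl; [reflexivity|].
  rewrite !interp_app, IH, app_nil_r.
  assert (E : beq n (interp env (if s then relator rels k else ainv (relator rels k))) []).
  { destruct s; [now apply relator_triv|]. rewrite interp_ainv, relator_triv; auto. reflexivity. }
  rewrite interp_ainv, E. simpl. apply cancel_r.
Qed.

Lemma cert_sound rels lhs rhs cert :
  Forall (fun uv => beq n (interp env (fst uv)) (interp env (snd uv))) rels ->
  aeqb (fred (lhs ++ ainv rhs)) (fred (cprod rels cert)) = true ->
  beq n (interp env lhs) (interp env rhs).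
Proof.
  intros H E. apply aeqb_eq in E.
  assert (H1 : beq n (interp env (lhs ++ ainv rhs)) []).
  { rewrite fred_ok, E, <- fred_ok. now apply cprod_triv. }
  rewrite interp_app, interp_ainv in H1.
  transitivity (interp env lhs ++ winv (interp env rhs) ++ interp env rhs).
  - rewrite cancel_l, app_nil_r. reflexivity.
  - rewrite app_assoc, H1. reflexivity.
Qed.

End Cert.

Definition trirels : list (aword*aword) := [([(0,true);(1,true);(2,true)],[(1,true);(2,true);(0,true)]); ([(1,true);(2,true);(0,true)],[(2,true);(0,true);(1,true)])].

Lemma trirels_ok n u v w : 1 <= u -> u < v -> v < w -> w <= n ->
  Forall (fun uv => beq n (interp (fun k => match k with 0 => p u v | 1 => p u w | _ => p v w end) (fst uv)) (interp (fun k => match k with 0 => p u v | 1 => p u w | _ => p v w end) (snd uv))) trirels.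
Proof.
  intros. apply Forall_cons; [cbn; apply beq_rel0; apply relA1; lia|].
  apply Forall_cons; [cbn; apply beq_rel0; apply relA2; lia|]. apply Forall_nil.
Qed.

Lemma t_w1 n u v w : 1 <= u -> u < v -> v < w -> w <= n ->
  beq n [pinv u v; p u w; p u v] [p u w; p v w; p u w; pinv v w; pinv u w].
Proof.
  intros. refine (cert_sound n (fun k => match k with 0 => p u v | 1 => p u w | _ => p v w end) trirels [(0,false);(1,true);(0,true)] [(1,true);(2,true);(1,true);(2,false);(1,false)] [([(0,false);(1,true)],0,true);([(0,false)],0,false);([(1,true);(2,true);(0,false);(2,false)],1,true)] (trirels_ok n u v w _ _ _ _) _); try assumption.
  vm_compute; reflexivity.
Qed.

Lemma t_w2 n u v w : 1 <= u -> u < v -> v < w -> w <= n ->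
  beq n [pinv u v; p v w; p u v] [p u w; p v w; pinv u w].
Proof.
  intros. refine (cert_sound n (fun k => match k with 0 => p u v | 1 => p u w | _ => p v w end) trirels [(0,false);(2,true);(0,true)] [(1,true);(2,true);(1,false)] [([(0,false);(2,true);(0,true);(1,true);(0,false);(2,false);(1,false)],0,false);([(0,false)],1,false)] (trirels_ok n u v w _ _ _ _) _); try assumption.
  vm_compute; reflexivity.
Qed.

Lemma t_w3 n u v w : 1 <= u -> u < v -> v < w -> w <= n ->
  beq n [p u v; p u w; pinv u v] [pinv v w; p u w; p v w].
Proof.
  intros. refine (cert_sound n (fun k => match k with 0 => p u v | 1 => p u w | _ => p v w end) trirels [(0,true);(1,true);(0,false)] [(2,false);(1,true);(2,true)] [([(0,true);(1,true);(0,false);(2,false);(1,false)],1,false)] (trirels_ok n u v w _ _ _ _) _); try assumption.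
  vm_compute; reflexivity.
Qed.

Lemma t_w4 n u v w : 1 <= u -> u < v -> v < w -> w <= n ->
  beq n [p u v; p v w; pinv u v] [pinv v w; pinv u w; p v w; p u w; p v w].
Proof.
  intros. refine (cert_sound n (fun k => match k with 0 => p u v | 1 => p u w | _ => p v w end) trirels [(0,true);(2,true);(0,false)] [(2,false);(1,false);(2,true);(1,true);(2,true)] [([(0,true);(1,false);(0,false)],0,true);([(0,true);(1,false);(0,false);(2,false)],1,true)] (trirels_ok n u v w _ _ _ _) _); try assumption.
  vm_compute; reflexivity.
Qed.

Lemma t_u1 n u v w : 1 <= u -> u < v -> v < w -> w <= n ->
  beq n [pinv v w; p u v; p v w] [p u v; p u w; p u v; pinv u w; pinv u v].
Proof.
  intros. refine (cert_sound n (fun k => match k with 0 => p u v | 1 => p u w | _ => p v w end) trirels [(2,false);(0,true);(2,true)] [(0,true);(1,true);(0,true);(1,false);(0,false)] [([(2,false)],0,true);([(2,false)],1,true);([(0,true);(1,true);(2,false);(1,false)],1,false)] (trirels_ok n u v w _ _ _ _) _); try assumption.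
  vm_compute; reflexivity.
Qed.

Lemma t_u2 n u v w : 1 <= u -> u < v -> v < w -> w <= n ->
  beq n [pinv v w; p u w; p v w] [p u v; p u w; pinv u v].
Proof.
  intros. refine (cert_sound n (fun k => match k with 0 => p u v | 1 => p u w | _ => p v w end) trirels [(2,false);(1,true);(2,true)] [(0,true);(1,true);(0,false)] [([(2,false)],1,true)] (trirels_ok n u v w _ _ _ _) _); try assumption.
  vm_compute; reflexivity.
Qed.

Lemma t_u3 n u v w : 1 <= u -> u < v -> v < w -> w <= n ->
  beq n [p v w; p u v; pinv v w] [pinv u w; p u v; p u w].
Proof.
  intros. refine (cert_sound n (fun k => match k with 0 => p u v | 1 => p u w | _ => p v w end) trirels [(2,true);(0,true);(2,false)] [(1,false);(0,true);(1,true)] [([(2,true);(0,true);(2,false);(1,false);(0,false)],0,false)] (trirels_ok n u v w _ _ _ _) _); try assumption.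
  vm_compute; reflexivity.
Qed.

Lemma t_u4 n u v w : 1 <= u -> u < v -> v < w -> w <= n ->
  beq n [p v w; p u w; pinv v w] [pinv u w; pinv u v; p u w; p u v; p u w].
Proof.
  intros. refine (cert_sound n (fun k => match k with 0 => p u v | 1 => p u w | _ => p v w end) trirels [(2,true);(1,true);(2,false)] [(1,false);(0,false);(1,true);(0,true);(1,true)] [([(2,true);(1,true);(2,false);(1,false);(0,false);(1,false)],0,true);([(2,true);(1,true);(0,false);(2,false);(1,false)],0,false);([(2,true);(1,true);(0,false);(2,false);(1,false)],1,false)] (trirels_ok n u v w _ _ _ _) _); try assumption.
  vm_compute; reflexivity.
Qed.

Lemma t_v1 n u v w : 1 <= u -> u < v -> v < w -> w <= n ->
  beq n [pinv u w; p u v; p u w] [p v w; p u v; pinv v w].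
Proof.
  intros. refine (cert_sound n (fun k => match k with 0 => p u v | 1 => p u w | _ => p v w end) trirels [(1,false);(0,true);(1,true)] [(2,true);(0,true);(2,false)] [([(1,false)],0,true)] (trirels_ok n u v w _ _ _ _) _); try assumption.
  vm_compute; reflexivity.
Qed.

Lemma t_v2 n u v w : 1 <= u -> u < v -> v < w -> w <= n ->
  beq n [pinv u w; p v w; p u w] [p v w; p u v; p v w; pinv u v; pinv v w].
Proof.
  intros. refine (cert_sound n (fun k => match k with 0 => p u v | 1 => p u w | _ => p v w end) trirels [(1,false);(2,true);(1,true)] [(2,true);(0,true);(2,true);(0,false);(2,false)] [([(1,false);(2,true)],0,false);([(1,false)],1,false)] (trirels_ok n u v w _ _ _ _) _); try assumption.
  vm_compute; reflexivity.
Qed.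

Lemma t_v3 n u v w : 1 <= u -> u < v -> v < w -> w <= n ->
  beq n [p u w; p u v; pinv u w] [pinv u v; pinv v w; p u v; p v w; p u v].
Proof.
  intros. refine (cert_sound n (fun k => match k with 0 => p u v | 1 => p u w | _ => p v w end) trirels [(1,true);(0,true);(1,false)] [(0,false);(2,false);(0,true);(2,true);(0,true)] [([(1,true);(0,true);(1,false);(0,false);(2,false);(1,true);(2,true);(0,false);(2,false);(1,false)],0,false);([(1,true);(0,true);(1,false);(0,false);(2,false)],1,true);([(1,true);(0,false);(2,false);(1,false)],1,false)] (trirels_ok n u v w _ _ _ _) _); try assumption.
  vm_compute; reflexivity.
Qed.

Lemma t_v4 n u v w : 1 <= u -> u < v -> v < w -> w <= n ->
  beq n [p u w; p v w; pinv u w] [pinv u v; p v w; p u v].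
Proof.
  intros. refine (cert_sound n (fun k => match k with 0 => p u v | 1 => p u w | _ => p v w end) trirels [(1,true);(2,true);(1,false)] [(0,false);(2,true);(0,true)] [([(1,true);(2,true);(1,false);(0,false);(2,false)],0,true);([(1,true);(2,true);(1,false);(0,false);(2,false)],1,true)] (trirels_ok n u v w _ _ _ _) _); try assumption.
  vm_compute; reflexivity.
Qed.

Lemma cr_i1 n a b c d : 1 <= a -> a < b -> b < c -> c < d -> d <= n ->
  beq n [pinv a c; p b d; p a c] [p b c; p a b; p b c; pinv a b; pinv b c; pinv b c; p b d; p b c; p b c; p a b; pinv b c; pinv a b; pinv b c].
Proof.
  intros. refine (cert_sound n (fun k => match k with 0 => p a b | 1 => p a c | 2 => p a d | 3 => p b c | 4 => p b d | _ => p c d end) [([(1,true);(3,false);(4,true);(3,true)],[(3,false);(4,true);(3,true);(1,true)]);([(1,false);(3,true);(1,true)],[(3,true);(0,true);(3,true);(0,false);(3,false)])] [(1,false);(4,true);(1,true)] [(3,true);(0,true);(3,true);(0,false);(3,false);(3,false);(4,true);(3,true);(3,true);(0,true);(3,false);(0,false);(3,false)] [([(1,false);(3,true)],0,false);([],1,true);([(3,true);(0,true);(3,true);(0,false);(3,false);(3,false);(4,true);(3,true);(1,false);(3,false);(1,true)],1,false)] _ _).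
  - apply Forall_cons; [cbn; apply beq_rel0; apply relC; lia|].
    apply Forall_cons; [cbn; apply (t_v2 n a b c); lia|]. apply Forall_nil.
  - vm_compute; reflexivity.
Qed.

Lemma cr_i2 n a b c d : 1 <= a -> a < b -> b < c -> c < d -> d <= n ->
  beq n [p a c; p b d; pinv a c] [pinv a b; p b c; p a b; pinv b c; p b d; p b c; pinv a b; pinv b c; p a b].
Proof.
  intros. refine (cert_sound n (fun k => match k with 0 => p a b | 1 => p a c | 2 => p a d | 3 => p b c | 4 => p b d | _ => p c d end) [([(1,true);(3,false);(4,true);(3,true)],[(3,false);(4,true);(3,true);(1,true)]);([(1,true);(3,true);(1,false)],[(0,false);(3,true);(0,true)])] [(1,true);(4,true);(1,false)] [(0,false);(3,true);(0,true);(3,false);(4,true);(3,true);(0,false);(3,false);(0,true)] [([(1,true);(3,true);(1,false)],0,true);([],1,true);([(0,false);(3,true);(0,true);(3,false);(4,true);(3,true);(1,true);(3,false);(1,false)],1,false)] _ _).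
  - apply Forall_cons; [cbn; apply beq_rel0; apply relC; lia|].
    apply Forall_cons; [cbn; apply (t_v4 n a b c); lia|]. apply Forall_nil.
  - vm_compute; reflexivity.
Qed.

Lemma cr_ii1 n a b c d : 1 <= a -> a < b -> b < c -> c < d -> d <= n ->
  beq n [pinv b d; p a c; p b d] [p c d; pinv b c; pinv c d; p b c; p a c; pinv b c; p c d; p b c; pinv c d].
Proof.
  intros. refine (cert_sound n (fun k => match k with 0 => p a b | 1 => p a c | 2 => p a d | 3 => p b c | 4 => p b d | _ => p c d end) [([(1,true);(3,false);(4,true);(3,true)],[(3,false);(4,true);(3,true);(1,true)]);([(4,false);(3,true);(4,true)],[(5,true);(3,true);(5,false)])] [(4,false);(1,true);(4,true)] [(5,true);(3,false);(5,false);(3,true);(1,true);(3,false);(5,true);(3,true);(5,false)] [([(4,false)],0,true);([(4,false);(3,false);(4,true);(3,true);(1,true);(3,false)],1,true);([(4,false);(3,false);(4,true)],1,false)] _ _).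
  - apply Forall_cons; [cbn; apply beq_rel0; apply relC; lia|].
    apply Forall_cons; [cbn; apply (t_v1 n b c d); lia|]. apply Forall_nil.
  - vm_compute; reflexivity.
Qed.

Lemma cr_ii2 n a b c d : 1 <= a -> a < b -> b < c -> c < d -> d <= n ->
  beq n [p b d; p a c; pinv b d] [pinv b c; pinv c d; pinv b c; p c d; p b c; p b c; p a c; pinv b c; pinv b c; pinv c d; p b c; p c d; p b c].
Proof.
  intros. refine (cert_sound n (fun k => match k with 0 => p a b | 1 => p a c | 2 => p a d | 3 => p b c | 4 => p b d | _ => p c d end) [([(1,true);(3,false);(4,true);(3,true)],[(3,false);(4,true);(3,true);(1,true)]);([(4,true);(3,true);(4,false)],[(3,false);(5,false);(3,true);(5,true);(3,true)])] [(4,true);(1,true);(4,false)] [(3,false);(5,false);(3,false);(5,true);(3,true);(3,true);(1,true);(3,false);(3,false);(5,false);(3,true);(5,true);(3,true)] [([(4,true);(1,true);(4,false);(3,false);(5,false);(3,false);(5,true);(3,true);(3,true);(1,false)],0,false);([(4,true);(1,true);(4,false);(3,false);(5,false);(3,false);(5,true);(3,true)],1,true);([(4,true);(3,false);(4,false)],1,false)] _ _).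
  - apply Forall_cons; [cbn; apply beq_rel0; apply relC; lia|].
    apply Forall_cons; [cbn; apply (t_v3 n b c d); lia|]. apply Forall_nil.
  - vm_compute; reflexivity.
Qed.

Section Pres.
Variable n : nat.

Definition Pres (g : word) (H : word -> Prop) :=
  forall s, H s -> in_gen n H (winv g ++ s ++ g) /\ in_gen n H (g ++ s ++ winv g).

Lemma conj_app g u v :
  beq n (winv g ++ (u ++ v) ++ g) ((winv g ++ u ++ g) ++ (winv g ++ v ++ g)).
Proof.
  symmetry. rewrite <- !app_assoc. rewrite (app_assoc g (winv g)), cancel_r. simpl. reflexivity.
Qed.

Lemma conj_closed g H T w : (forall s, H s -> in_gen n T (winv g ++ s ++ g)) ->
  in_gen n H w -> in_gen n T (winv g ++ w ++ g).
Proof.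
  intros Hs [w' [Hp Hb]]. rewrite Hb. clear Hb w.
  induction Hp as [|w0 s Hp IH Hs0|w0 s Hp IH Hs0].
  - simpl. rewrite cancel_l. apply gen_nil.
  - rewrite conj_app. apply gen_app; auto.
  - rewrite conj_app. apply gen_app; auto.
    specialize (Hs s Hs0). apply gen_winv in Hs.
    rewrite !winv_app, winv_inv, <- app_assoc in Hs. exact Hs.
Qed.

Lemma pres_gen g H w : Pres g H -> in_gen n H w ->
  in_gen n H (winv g ++ w ++ g) /\ in_gen n H (g ++ w ++ winv g).
Proof.
  intros HP Hw. split.
  - apply conj_closed with (H := H); auto. intros s Hs; apply (HP s Hs).
  - rewrite <- (winv_inv g) at 1. apply conj_closed with (H := H); auto.
    intros s Hs. rewrite winv_inv. apply (HP s Hs).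
Qed.

Lemma pres_inv g H : Pres g H -> Pres (winv g) H.
Proof. intros HP s Hs. rewrite winv_inv. destruct (HP s Hs); split; auto. Qed.

Lemma pres_word H g s : (forall x, In x g -> Pres [x] H) -> in_gen n H s ->
  in_gen n H (winv g ++ s ++ g).
Proof.
  revert s; induction g as [|x g IH]; intros s Hx Hs.
  - simpl. now rewrite app_nil_r.
  - replace (winv (x :: g) ++ s ++ x :: g) with (winv g ++ (winv [x] ++ s ++ [x]) ++ g).
    + apply IH. { intros; apply Hx; simpl; auto. }
      apply pres_gen; auto. apply Hx; simpl; auto.
    + rewrite (winv_cons x g), <- !app_assoc. reflexivity.
Qed.

Lemma gen_ext H H' w : (forall s, H s <-> H' s) -> in_gen n H w -> in_gen n H' w.
Proof. intros E. apply gen_mono. intros s Hs. apply gen_base. now apply E. Qed.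

Lemma pres_ext g H H' : (forall s, H s <-> H' s) -> Pres g H -> Pres g H'.
Proof.
  intros E HP s Hs. apply E in Hs. destruct (HP s Hs). split; eapply gen_ext; eauto.
Qed.

Lemma pres_union g H1 H2 : Pres g H1 -> Pres g H2 -> Pres g (fun s => H1 s \/ H2 s).
Proof.
  intros P1 P2 s [Hs|Hs].
  - destruct (P1 s Hs); split; (eapply gen_mono; [|eassumption]); intros; apply gen_base; auto.
  - destruct (P2 s Hs); split; (eapply gen_mono; [|eassumption]); intros; apply gen_base; auto.
Qed.

Lemma pres_self g H : H g -> Pres g H.
Proof.
  intros Hg s Hs. split.
  - apply gen_conj; apply gen_base; auto.
  - rewrite <- (winv_inv g) at 1. apply gen_conj; [apply gen_base; auto|].
    apply gen_winv, gen_base; auto.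
Qed.

Lemma pres_comm g h : beq n (g ++ h) (h ++ g) -> Pres g (fun s => In s [h]).
Proof.
  intros E s [<-|[]]. split.
  - apply (gen_beq n _ _ h); [|apply gen_base; simpl; auto].
    rewrite <- E, app_assoc, cancel_l. reflexivity.
  - apply (gen_beq n _ _ h); [|apply gen_base; simpl; auto].
    rewrite app_assoc, E, <- app_assoc, cancel_r, app_nil_r. reflexivity.
Qed.

End Pres.

Lemma gen_cons2 n S x y w : in_gen n S [x] -> in_gen n S (y :: w) -> in_gen n S (x :: y :: w).
Proof. intros. change (x :: y :: w) with ([x] ++ (y :: w)). now apply gen_app. Qed.
Lemma gen_pinv n S a b : in_gen n S [p a b] -> in_gen n S [pinv a b].
Proof. intro H. exact (gen_winv n S _ H). Qed.

Ltac inL := simpl; repeat (first [left; reflexivity | right]).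
Ltac gsolve := repeat (apply gen_cons2); first [apply gen_nil | idtac];
  try apply gen_pinv; apply gen_base; inL.

Ltac trip f := eapply gen_beq; [apply f; lia | gsolve].

Section Tri.
Variables n u v w : nat.
Hypotheses (H1 : 1 <= u) (H2 : u < v) (H3 : v < w) (H4 : w <= n).

Lemma tri_w : Pres n [p u v] (fun s => In s [[p u w]; [p v w]]).
Proof. intros s Hs; simpl in Hs; destruct Hs as [<-|[<-|[]]]; split.
  - trip t_w1. - trip t_w3. - trip t_w2. - trip t_w4. Qed.
Lemma tri_u : Pres n [p v w] (fun s => In s [[p u v]; [p u w]]).
Proof. intros s Hs; simpl in Hs; destruct Hs as [<-|[<-|[]]]; split.
  - trip t_u1. - trip t_u3. - trip t_u2. - trip t_u4. Qed.
Lemma tri_v : Pres n [p u w] (fun s => In s [[p u v]; [p v w]]).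
Proof. intros s Hs; simpl in Hs; destruct Hs as [<-|[<-|[]]]; split.
  - trip t_v1. - trip t_v3. - trip t_v2. - trip t_v4. Qed.
End Tri.

Lemma pres_union_list n g L1 L2 L : Pres n g (fun s => In s L1) -> Pres n g (fun s => In s L2) ->
  (forall s, In s L <-> In s L1 \/ In s L2) -> Pres n g (fun s => In s L).
Proof.
  intros P1 P2 E. eapply pres_ext; [|apply pres_union; [exact P1|exact P2]].
  intro s; simpl. rewrite E. tauto.
Qed.

Lemma pres_sub n g L1 L s : Pres n g (fun t => In t L1) -> In s L1 -> (forall t, In t L1 -> In t L) ->
  in_gen n (fun t => In t L) (winv g ++ s ++ g) /\ in_gen n (fun t => In t L) (g ++ s ++ winv g).
Proof.
  intros P Hs Inc. destruct (P s Hs). split; (eapply gen_mono; [|eassumption]);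
  intros; apply gen_base; auto.
Qed.

Ltac letters PB PX := let x := fresh "x" in let Hx := fresh "Hx" in
  intros x Hx; simpl in Hx; repeat destruct Hx as [<-|Hx]; try contradiction;
  first [exact PB | exact PX | exact (pres_inv _ _ _ PB) | exact (pres_inv _ _ _ PX)].

Section Four.
Variables n a b c d : nat.
Hypotheses (H1 : 1 <= a) (H2 : a < b) (H3 : b < c) (H4 : c < d) (H5 : d <= n).

Lemma com1a : Pres n [p a b] (fun s => In s [[p c d]]).
Proof. apply pres_comm. apply beq_rel0, relB1; lia. Qed.
Lemma com1b : Pres n [p c d] (fun s => In s [[p a b]]).
Proof. apply pres_comm. symmetry. apply beq_rel0, relB1; lia. Qed.
Lemma com2a : Pres n [p a d] (fun s => In s [[p b c]]).
Proof. apply pres_comm. apply beq_rel0, relB2; lia. Qed.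
Lemma com2b : Pres n [p b c] (fun s => In s [[p a d]]).
Proof. apply pres_comm. symmetry. apply beq_rel0, relB2; lia. Qed.

Ltac incl := let t := fresh "t" in let Ht := fresh "Ht" in
  intros t Ht; simpl in Ht |- *; tauto.

Lemma cross_i_b : Pres n [p a c] (fun s => In s [[p a b]; [p b c]; [p b d]]).
Proof.
  intros s Hs; simpl in Hs; destruct Hs as [<-|[<-|[<-|[]]]].
  - apply (pres_sub n _ [[p a b]; [p b c]]); [apply tri_v; lia|inL|incl].
  - apply (pres_sub n _ [[p a b]; [p b c]]); [apply tri_v; lia|inL|incl].
  - split.
    + eapply gen_beq; [apply cr_i1; lia|gsolve].
    + eapply gen_beq; [apply cr_i2; lia|gsolve].
Qed.

Lemma cross_i_d : Pres n [p a c] (fun s => In s [[p a d]; [p b d]; [p c d]]).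
Proof.
  assert (PB : Pres n [p b c] (fun s => In s [[p a d]; [p b d]; [p c d]])).
  { apply (pres_union_list n _ [[p b d]; [p c d]] [[p a d]]); [apply tri_w; lia|apply com2b|].
    intro s; simpl; tauto. }
  assert (PX : Pres n [p a b] (fun s => In s [[p a d]; [p b d]; [p c d]])).
  { apply (pres_union_list n _ [[p a d]; [p b d]] [[p c d]]); [apply tri_w; lia|apply com1a|].
    intro s; simpl; tauto. }
  intros s Hs; simpl in Hs; destruct Hs as [<-|[<-|[<-|[]]]].
  - apply (pres_sub n _ [[p a d]; [p c d]]); [apply tri_w; lia|inL|incl].
  - split.
    + eapply gen_beq; [apply cr_i1; lia|].
      change (in_gen n (fun s => In s [[p a d]; [p b d]; [p c d]])
        (winv [p b c; p b c; p a b; pinv b c; pinv a b; pinv b c] ++ [p b d] ++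
              [p b c; p b c; p a b; pinv b c; pinv a b; pinv b c])).
      apply pres_word; [letters PB PX|gsolve].
    + eapply gen_beq; [apply cr_i2; lia|].
      change (in_gen n (fun s => In s [[p a d]; [p b d]; [p c d]])
        (winv [p b c; pinv a b; pinv b c; p a b] ++ [p b d] ++ [p b c; pinv a b; pinv b c; p a b])).
      apply pres_word; [letters PB PX|gsolve].
  - apply (pres_sub n _ [[p a d]; [p c d]]); [apply tri_w; lia|inL|incl].
Qed.

Lemma cross_ii_c : Pres n [p b d] (fun s => In s [[p a c]; [p b c]; [p c d]]).
Proof.
  intros s Hs; simpl in Hs; destruct Hs as [<-|[<-|[<-|[]]]].
  - split.
    + eapply gen_beq; [apply cr_ii1; lia|gsolve].
    + eapply gen_beq; [apply cr_ii2; lia|gsolve].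
  - apply (pres_sub n _ [[p b c]; [p c d]]); [apply tri_v; lia|inL|incl].
  - apply (pres_sub n _ [[p b c]; [p c d]]); [apply tri_v; lia|inL|incl].
Qed.

Lemma cross_ii_a : Pres n [p b d] (fun s => In s [[p a b]; [p a c]; [p a d]]).
Proof.
  assert (PB : Pres n [p b c] (fun s => In s [[p a b]; [p a c]; [p a d]])).
  { apply (pres_union_list n _ [[p a b]; [p a c]] [[p a d]]); [apply tri_u; lia|apply com2b|].
    intro s; simpl; tauto. }
  assert (PW : Pres n [p c d] (fun s => In s [[p a b]; [p a c]; [p a d]])).
  { apply (pres_union_list n _ [[p a c]; [p a d]] [[p a b]]); [apply tri_u; lia|apply com1b|].
    intro s; simpl; tauto. }
  intros s Hs; simpl in Hs; destruct Hs as [<-|[<-|[<-|[]]]].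
  - apply (pres_sub n _ [[p a b]; [p a d]]); [apply tri_u; lia|inL|incl].
  - split.
    + eapply gen_beq; [apply cr_ii1; lia|].
      change (in_gen n (fun s => In s [[p a b]; [p a c]; [p a d]])
        (winv [pinv b c; p c d; p b c; pinv c d] ++ [p a c] ++ [pinv b c; p c d; p b c; pinv c d])).
      apply pres_word; [letters PB PW|gsolve].
    + eapply gen_beq; [apply cr_ii2; lia|].
      change (in_gen n (fun s => In s [[p a b]; [p a c]; [p a d]])
        (winv [pinv b c; pinv b c; pinv c d; p b c; p c d; p b c] ++ [p a c] ++
              [pinv b c; pinv b c; pinv c d; p b c; p c d; p b c])).
      apply pres_word; [letters PB PW|gsolve].
  - apply (pres_sub n _ [[p a b]; [p a d]]); [apply tri_u; lia|inL|incl].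
Qed.

End Four.

Definition Qgen (n j : nat) (u : word) : Prop :=
  exists a b, 1 <= a /\ a < b /\ b <= n /\ (a = j \/ b = j) /\ u = [p a b].

Ltac qtac := let s := fresh "s" in let Hs := fresh "Hs" in
  intros s Hs; simpl in Hs; repeat destruct Hs as [<-|Hs]; try contradiction;
  do 2 eexists; repeat split; try reflexivity; lia.

Lemma gen_norm n j a b x y : 1 <= a -> a < b -> b <= n -> a <> j -> b <> j ->
  1 <= x -> x < y -> y <= n -> (x = j \/ y = j) ->
  exists L, In [p x y] L /\ (forall s, In s L -> Qgen n j s) /\ Pres n [p a b] (fun s => In s L).
Proof.
  intros.
  assert (Hc : x = a \/ x = b \/ y = a \/ y = b \/ (x <> a /\ x <> b /\ y <> a /\ y <> b)) by lia.
  destruct Hc as [Hc|[Hc|[Hc|[Hc|Hc]]]].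
  - subst x. assert (y = j) by lia. subst y.
    assert (Hd : j < b \/ b < j) by lia. destruct Hd.
    + exists [[p a j]; [p j b]]; split; [inL|split; [qtac|apply tri_v; lia]].
    + exists [[p a j]; [p b j]]; split; [inL|split; [qtac|apply tri_w; lia]].
  - subst x. assert (y = j) by lia. subst y.
    exists [[p a j]; [p b j]]; split; [inL|split; [qtac|apply tri_w; lia]].
  - subst y. assert (x = j) by lia. subst x.
    exists [[p j a]; [p j b]]; split; [inL|split; [qtac|apply tri_u; lia]].
  - subst y. assert (x = j) by lia. subst x.
    assert (Hd : j < a \/ a < j) by lia. destruct Hd.
    + exists [[p j a]; [p j b]]; split; [inL|split; [qtac|apply tri_u; lia]].
    + exists [[p a j]; [p j b]]; split; [inL|split; [qtac|apply tri_v; lia]].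
  - assert (Hd : y < a \/ b < x \/ (x < a /\ b < y) \/ (a < x /\ y < b) \/
                 (x < a /\ a < y /\ y < b) \/ (a < x /\ x < b /\ b < y)) by lia.
    destruct Hd as [Hd|[Hd|[Hd|[Hd|[Hd|Hd]]]]].
    + exists [[p x y]]; split; [inL|split; [qtac|apply (com1b n x y a b); lia]].
    + exists [[p x y]]; split; [inL|split; [qtac|apply (com1a n a b x y); lia]].
    + exists [[p x y]]; split; [inL|split; [qtac|apply (com2b n x a b y); lia]].
    + exists [[p x y]]; split; [inL|split; [qtac|apply (com2a n a x y b); lia]].
    + destruct H7; subst.
      * exists [[p j a]; [p j y]; [p j b]]; split; [inL|split; [qtac|apply (cross_ii_a n j a y b); lia]].
      * exists [[p x j]; [p a j]; [p j b]]; split; [inL|split; [qtac|apply (cross_ii_c n x a j b); lia]].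
    + destruct H7; subst.
      * exists [[p a j]; [p j b]; [p j y]]; split; [inL|split; [qtac|apply (cross_i_b n a j b y); lia]].
      * exists [[p a j]; [p x j]; [p b j]]; split; [inL|split; [qtac|apply (cross_i_d n a x b j); lia]].
Qed.

Lemma pres_Q_letter n j a b : 1 <= a -> a < b -> b <= n -> Pres n [p a b] (Qgen n j).
Proof.
  intros Ha Hab Hb.
  destruct (Nat.eq_dec a j) as [E|E]; [|destruct (Nat.eq_dec b j) as [E'|E']].
  - apply pres_self. exists a, b; repeat split; auto.
  - apply pres_self. exists a, b; repeat split; auto.
  - intros s [x [y [Hx [Hxy [Hy [Hj ->]]]]]].
    destruct (gen_norm n j a b x y) as [L [HL [HQ HP]]]; auto.
    destruct (HP _ HL) as [P1 P2]. split; (eapply gen_mono; [|eassumption]);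
    intros t Ht; apply gen_base; auto.
Qed.

Lemma pres_Q_valid n j x : valid_letter n x -> Pres n [x] (Qgen n j).
Proof.
  destruct x as [a b [|]]; intros [Ha [Hab Hb]]; simpl in *.
  - now apply pres_Q_letter.
  - exact (pres_inv n _ _ (pres_Q_letter n j a b Ha Hab Hb)).
Qed.

Lemma Q_normal n j y x : valid n y -> in_Q n (fun k => k = j) x ->
  in_Q n (fun k => k = j) (winv y ++ x ++ y).
Proof.
  intros Hy Hx. apply (pres_word n (Qgen n j)); [|exact Hx].
  intros l Hl. apply pres_Q_valid. unfold valid in Hy. rewrite Forall_forall in Hy. auto.
Qed.

Lemma Q_normal' n j y x : valid n y -> in_Q n (fun k => k = j) x ->
  in_Q n (fun k => k = j) (y ++ x ++ winv y).
Proof.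
  intros Hy Hx. rewrite <- (winv_inv y) at 1. apply Q_normal; auto.
  unfold valid, winv in *. apply Forall_rev. apply Forall_map.
  eapply Forall_impl; [|exact Hy]. intros [a b s]; unfold valid_letter; simpl; auto.
Qed.

Definition hasb (j : nat) (w : word) : bool := existsb (fun x => negb (keep j x)) w.

Lemma keep_linv j x : keep j (linv x) = keep j x.
Proof. destruct x; reflexivity. Qed.

Lemma hasb_app j u v : hasb j (u ++ v) = hasb j u || hasb j v.
Proof. apply existsb_app. Qed.

Lemma hasb_winv j u : hasb j (winv u) = hasb j u.
Proof.
  unfold hasb, winv. induction u as [|x u IH]; simpl; auto.
  rewrite existsb_app, IH. simpl. rewrite keep_linv, orb_false_r. apply orb_comm.
Qed.

Lemma hasb_false j w : hasb j w = false -> Forall (fun x => ~ hasj j x) w.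
Proof.
  induction w as [|x w IH]; simpl; intro H; constructor.
  - apply orb_false_iff in H as [H _]. unfold keep, hasj in *.
    destruct (Nat.eqb_spec (la x) j), (Nat.eqb_spec (lb x) j); simpl in H; try discriminate; tauto.
  - apply IH. apply orb_false_iff in H; tauto.
Qed.

Lemma valid_app n u v : valid n u -> valid n v -> valid n (u ++ v).
Proof. intros; apply Forall_app; auto. Qed.

Lemma valid_winv n u : valid n u -> valid n (winv u).
Proof.
  unfold valid, winv. intro. apply Forall_rev, Forall_map.
  eapply Forall_impl; [|eassumption]. intros [a b s]; unfold valid_letter; simpl; auto.
Qed.

Lemma winv_wcomm x y : winv (wcomm x y) = wcomm y x.
Proof. unfold wcomm. rewrite !winv_app, !winv_inv, <- !app_assoc. reflexivity. Qed.

Section Monic.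
Variable n : nat.

Lemma monic_valid x : monic n x -> valid n x.
Proof.
  induction 1.
  - repeat constructor; unfold valid_letter; simpl; lia.
  - repeat constructor; unfold valid_letter; simpl; lia.
  - unfold wcomm. repeat apply valid_app; auto; apply valid_winv; auto.
Qed.

Lemma monic_winv x : monic n x -> monic n (winv x).
Proof.
  induction 1.
  - now apply monic_pinv.
  - now apply monic_p.
  - rewrite winv_wcomm. apply monic_comm; auto.
    intro E. apply H1. rewrite <- (winv_inv (wcomm x y)), winv_wcomm, E. reflexivity.
Qed.

Lemma monic_nontriv x : monic n x -> ~ beq n x [].
Proof.
  induction 1; auto.
  - apply leaf_nontriv.
  - apply leafi_nontriv.
Qed.

Lemma monic_Q j x : monic n x -> hasb j x = true -> in_Q n (fun k => k = j) x.
Proof.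
  induction 1 as [a b Ha Hab Hb|a b Ha Hab Hb|x y Mx IHx My IHy Hne]; intro Hj.
  - apply gen_base. exists a, b. unfold hasb, keep in Hj; simpl in Hj.
    repeat split; auto. destruct (Nat.eqb_spec a j), (Nat.eqb_spec b j); simpl in Hj; auto; discriminate.
  - apply (gen_winv n _ [p a b]), gen_base. exists a, b. unfold hasb, keep in Hj; simpl in Hj.
    repeat split; auto. destruct (Nat.eqb_spec a j), (Nat.eqb_spec b j); simpl in Hj; auto; discriminate.
  - unfold wcomm in *. rewrite !hasb_app, !hasb_winv in Hj.
    destruct (hasb j x) eqn:Ex.
    + pose proof (IHx eq_refl) as Qx.
      apply gen_app; [apply gen_winv; exact Qx|]. apply Q_normal; [apply monic_valid; auto|exact Qx].
    + destruct (hasb j y) eqn:Ey; [|simpl in Hj; discriminate].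
      rewrite app_assoc, app_assoc. rewrite <- (app_assoc (winv x)).
      pose proof (IHy eq_refl) as Qy.
      apply gen_app; [|exact Qy]. apply Q_normal; [apply monic_valid; auto|]. apply gen_winv; exact Qy.
Qed.

End Monic.

Section Main.
Variable n : nat.
Definition allQ (T : list nat) (x : word) := forall i, In i T -> in_Q n (fun k => k = i) x.
Definition Cset T x := monic n x /\ allQ T x.
Definition Dset j T x := monic n x /\ allQ T x /\ hasb j x = true.
Definition Eset j T x := monic n x /\ allQ T x /\ hasb j x = false.

Lemma allQ_app T u v : allQ T u -> allQ T v -> allQ T (u ++ v).
Proof. intros Hu Hv i Hi. apply gen_app; [apply Hu|apply Hv]; auto. Qed.
Lemma allQ_winv T u : allQ T u -> allQ T (winv u).
Proof. intros Hu i Hi. apply gen_winv; apply Hu; auto. Qed.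

Lemma Cset_winv T x : Cset T x -> Cset T (winv x).
Proof. intros [M A]; split; [apply monic_winv; auto|apply allQ_winv; auto]. Qed.
Lemma Eset_winv j T x : Eset j T x -> Eset j T (winv x).
Proof. intros [M [A Hb]]; split; [apply monic_winv; auto|split; [apply allQ_winv; auto|now rewrite hasb_winv]]. Qed.

Lemma base w : valid n w -> in_gen n (Cset []) w.
Proof.
  induction w as [|x w IH]; intro Hv; [apply gen_nil|].
  inversion Hv as [|? ? Hx Hw]; subst. change (x :: w) with ([x] ++ w).
  apply gen_app; auto. apply gen_base. split; [|intros i []].
  destruct x as [a b [|]]; destruct Hx as [Ha [Hab Hb]]; simpl in *.
  - now apply monic_p.
  - now apply monic_pinv.
Qed.

Lemma D_conj j T b x : Eset j T b -> Dset j T x -> in_gen n (Dset j T) (b ++ x ++ winv b).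
Proof.
  intros Eb [Mx [Ax Hx]].
  assert (Eb' : Eset j T (winv b)) by now apply Eset_winv.
  destruct Eb' as [Mb' [Ab' Hb']].
  assert (Eq : beq n (b ++ x ++ winv b) (x ++ wcomm x (winv b))).
  { unfold wcomm. rewrite winv_inv, (app_assoc x (winv x)), cancel_r. reflexivity. }
  rewrite Eq.
  destruct (classic (beq n (wcomm x (winv b)) [])) as [Z|NZ].
  - rewrite Z, app_nil_r. apply gen_base. split; auto.
  - apply gen_app; apply gen_base; [split; auto|].
    split; [apply monic_comm; auto|split].
    + unfold wcomm. repeat apply allQ_app; auto; apply allQ_winv; auto.
    + unfold wcomm. rewrite !hasb_app, !hasb_winv, Hx. reflexivity.
Qed.

Lemma E1 j T b s : Eset j T b -> in_gen n (Dset j T) s -> in_gen n (Dset j T) (b ++ s ++ winv b).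
Proof.
  intros Eb Hs. rewrite <- (winv_inv b) at 1.
  apply conj_closed with (H := Dset j T); auto.
  intros x Dx. rewrite winv_inv. now apply D_conj.
Qed.

Lemma E_conj j T beta : prod_of (Eset j T) beta -> forall s, in_gen n (Dset j T) s ->
  in_gen n (Dset j T) (beta ++ s ++ winv beta).
Proof.
  induction 1 as [|w0 b Hp IH Hb|w0 b Hp IH Hb]; intros s Hs.
  - simpl. now rewrite app_nil_r.
  - replace ((w0 ++ b) ++ s ++ winv (w0 ++ b)) with (w0 ++ (b ++ s ++ winv b) ++ winv w0)
      by (rewrite winv_app, <- !app_assoc; reflexivity).
    apply IH. now apply E1.
  - replace ((w0 ++ winv b) ++ s ++ winv (w0 ++ winv b)) with (w0 ++ (winv b ++ s ++ winv (winv b)) ++ winv w0)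
      by (rewrite (winv_app w0), <- !app_assoc; reflexivity).
    apply IH. apply E1; auto. now apply Eset_winv.
Qed.

Lemma ext j T w0 s alpha beta : in_gen n (Dset j T) alpha -> prod_of (Eset j T) beta ->
  beq n w0 (alpha ++ beta) -> Cset T s ->
  exists alpha' beta', in_gen n (Dset j T) alpha' /\ prod_of (Eset j T) beta' /\
    beq n (w0 ++ s) (alpha' ++ beta').
Proof.
  intros Ha Hb Hw [Ms As]. destruct (hasb j s) eqn:Hs.
  - exists (alpha ++ (beta ++ s ++ winv beta)), beta. split; [|split; auto].
    + apply gen_app; auto. apply E_conj; auto. apply gen_base. split; auto.
    + rewrite Hw, <- !app_assoc, cancel_l, app_nil_r. reflexivity.
  - exists alpha, (beta ++ s). split; auto. split.
    + apply prod_snoc; auto. split; auto.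
    + rewrite Hw, app_assoc. reflexivity.
Qed.

Lemma decomp j T w : prod_of (Cset T) w ->
  exists alpha beta, in_gen n (Dset j T) alpha /\ prod_of (Eset j T) beta /\ beq n w (alpha ++ beta).
Proof.
  induction 1 as [|w0 s Hp IH Hs|w0 s Hp IH Hs].
  - exists [], []. split; [apply gen_nil|split; [constructor|reflexivity]].
  - destruct IH as [a [b [Ha [Hb Hw]]]]. eapply ext; eauto.
  - destruct IH as [a [b [Ha [Hb Hw]]]]. eapply ext; eauto. now apply Cset_winv.
Qed.

Lemma prod_E_nohas j T beta : prod_of (Eset j T) beta -> Forall (fun x => ~ hasj j x) beta.
Proof.
  induction 1 as [|w0 b Hp IH Hb|w0 b Hp IH Hb]; [constructor| |]; apply Forall_app; split; auto.
  - apply hasb_false. apply Hb.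
  - apply hasb_false. rewrite hasb_winv. apply Hb.
Qed.

Lemma mainT T w : valid n w -> allQ T w -> in_gen n (Cset T) w.
Proof.
  revert w; induction T as [|j T IH]; intros w Hv HQ.
  - now apply base.
  - assert (HQ' : allQ T w) by (intros i Hi; apply HQ; simpl; auto).
    destruct (IH w Hv HQ') as [w' [Hp Hb]].
    destruct (decomp j T w' Hp) as [a [b [Ha [HbE Hw]]]].
    assert (Qa : in_Q n (fun k => k = j) a).
    { eapply gen_mono; [|exact Ha]. intros x [Mx [_ Hx]]. now apply monic_Q. }
    assert (Qw : in_Q n (fun k => k = j) w) by (apply HQ; simpl; auto).
    assert (Eb : beq n b (winv a ++ w)).
    { rewrite Hb, Hw, app_assoc, cancel_l. reflexivity. }
    assert (Qb : in_Q n (fun k => k = j) b).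
    { rewrite Eb. apply gen_app; auto. now apply gen_winv. }
    assert (Tb : beq n b []) by (eapply Q_nohas_triv; eauto; eapply prod_E_nohas; eauto).
    rewrite Hb, Hw, Tb, app_nil_r.
    eapply gen_mono; [|exact Ha]. intros x [Mx [Ax Hx]]. apply gen_base.
    split; auto. intros i [<-|Hi]; auto. now apply monic_Q.
Qed.

End Main.

Lemma P_letters n (S : nat -> Prop) w :
  prod_of (fun u => exists a b, 1 <= a /\ a < b /\ b <= n /\ S a /\ S b /\ u = [p a b]) w ->
  Forall (fun l => S (la l) /\ S (lb l)) w.
Proof.
  induction 1 as [|w0 s Hp IH Hs|w0 s Hp IH Hs]; [constructor| |]; apply Forall_app; split; auto;
  destruct Hs as [a [b [_ [_ [_ [Sa [Sb ->]]]]]]]; repeat constructor; simpl; auto.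
Qed.

Lemma in_P_of n (S : nat -> Prop) x : valid n x -> Forall (fun l => S (la l) /\ S (lb l)) x -> in_P n S x.
Proof.
  induction x as [|l x IH]; intros Hv HS; [apply gen_nil|].
  inversion Hv as [|? ? Hl Hx]; inversion HS as [|? ? [Sa Sb] HS']; subst.
  change (l :: x) with ([l] ++ x). apply gen_app; [|exact (IH Hx HS')].
  destruct l as [a b [|]]; destruct Hl as [Ha [Hab Hb]]; simpl in *.
  - apply gen_base. exists a, b; repeat split; auto.
  - apply (gen_winv n _ [p a b]). apply gen_base. exists a, b; repeat split; auto.
Qed.

Lemma full_support_of n x : monic n x -> allQ n (seq 1 n) x -> full_support n x.
Proof.
  intros M AQ i. split; [intros [H _]; exact H|]. intro Hi. split; auto.
  intros S HS HP. apply NNPP; intro nS.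
  destruct HP as [x' [Hp Hb]].
  assert (Qx : in_Q n (fun k => k = i) x) by (apply AQ; apply in_seq; lia).
  assert (Qx' : in_Q n (fun k => k = i) x') by (rewrite <- Hb; exact Qx).
  assert (F : Forall (fun l => ~ hasj i l) x').
  { eapply Forall_impl; [|apply (P_letters n S x' Hp)].
    intros l [Sa Sb] [E|E]; rewrite E in *; contradiction. }
  apply (monic_nontriv n x M). rewrite Hb. eapply Q_nohas_triv; eauto.
Qed.

Lemma gen_brun n x i : monic n x -> full_support n x -> 1 <= i <= n -> in_Q n (fun k => k = i) x.
Proof.
  intros M FS Hi.
  set (S := fun k => exists l, In l x /\ (la l = k \/ lb l = k)).
  assert (V : valid n x) by (now apply monic_valid).
  assert (HS : forall k, S k -> 1 <= k <= n).
  { intros k [l [Hl Hk]]. unfold valid in V. rewrite Forall_forall in V.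
    destruct (V l Hl) as [A [B C]]. lia. }
  assert (HP : in_P n S x).
  { apply in_P_of; auto. rewrite Forall_forall. intros l Hl. split; exists l; auto. }
  destruct (proj2 (FS i) Hi) as [_ Hsup]. destruct (Hsup S HS HP) as [l [Hl Hk]].
  apply monic_Q; auto. unfold hasb. apply existsb_exists. exists l. split; auto.
  unfold keep. destruct Hk as [<-| <-]; rewrite Nat.eqb_refl; simpl; [|rewrite orb_true_r]; reflexivity.
Qed.

Theorem corollary2p3 (n : nat) (w : word) :
  valid n w ->
  (brunnian n w <-> in_gen n (fun x => monic n x /\ full_support n x) w).
Proof.
  intro Hv. split.
  - intro Hb. assert (AQ : allQ n (seq 1 n) w).
    { intros i Hi. apply in_seq in Hi. apply Hb. lia. }
    eapply gen_mono; [|exact (mainT n (seq 1 n) w Hv AQ)].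
    intros x [M A]. apply gen_base. split; auto. now apply full_support_of.
  - intros Hg i Hi. eapply gen_mono; [|exact Hg].
    intros x [M FS]. now apply gen_brun.
Qed.
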